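(* Let $p$ be a prime, $q$ a power of $p$, and $F$ a field of characteristic $p$ containing $\mathbb{F}_q$. Let $L\in F[x]$ be a monic $q$-polynomial of $q$-degree $n\ge1$ such that $L(x)/x$ is irreducible over $F$ and the coefficient of $x$ in $L$ is $(-1)^n$. Then the Galois group $G$ of $L$ over $F$ is isomorphic to a subgroup of $SL(n,q)$ that acts transitively on the nonzero vectors of $\mathbb{F}_q^n$.
   Context: A $q$-polynomial over $F$ is a polynomial $\sum_{i=0}^n a_i x^{q^i}\in F[x]$; with $a_n\ne0$ its $q$-degree is $n$. The Galois group of $L$ over $F$ is the Galois group of a splitting field of $L$ over $F$; it acts $\mathbb{F}_q$-linearly on the $n$-dimensional $\mathbb{F}_q$-space of roots of $L$. *)

(* Defs.v *)
From HB Require Import structures.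
From mathcomp Require Import all_boot all_order all_algebra all_fingroup all_field.
Set Implicit Arguments. Unset Strict Implicit. Unset Printing Implicit Defensive.
Import GRing.Theory.
Local Open Scope ring_scope.

Definition is_qpoly (F : fieldType) (q : nat) (L : {poly F}) : Prop :=
  forall j : nat, L`_j != 0 -> exists i : nat, j = (q ^ i)%N.

Definition qdegree_is (F : fieldType) (q : nat) (L : {poly F}) (n : nat) : Prop :=
  size L = ((q ^ n).+1)%N.

(* Main.v *)
Require Import Defs.
From HB Require Import structures.
From mathcomp Require Import all_boot all_order all_algebra all_fingroup all_field.
From mathcomp Require Import ring zify.
Import GRing.Theory.
Local Open Scope ring_scope.

Definition frq {R : comNzRingType} {N : nat} (h : [pchar R].-nat N) (x : R) := x ^+ N.

Lemma frq_is_nmod (R : comNzRingType) N (h : [pchar R].-nat N) :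
  nmod_morphism (frq h).
Proof.
split; first by rewrite /frq expr0n; case: N h => //; rewrite /pnat.
by move=> x y; rewrite /frq exprDn_pchar.
Qed.
Lemma frq_is_monoid (R : comNzRingType) N (h : [pchar R].-nat N) :
  monoid_morphism (frq h).
Proof. by split; [rewrite /frq expr1n | move=> x y; rewrite /frq exprMn]. Qed.
HB.instance Definition _ (R : comNzRingType) N (h : [pchar R].-nat N) :=
  GRing.isNmodMorphism.Build R R (frq h) (@frq_is_nmod R N h).
HB.instance Definition _ (R : comNzRingType) N (h : [pchar R].-nat N) :=
  GRing.isMonoidMorphism.Build R R (frq h) (@frq_is_monoid R N h).

Lemma mx_ext (R : nzRingType) m (A B : 'M[R]_m) :
  (forall u : 'cV_m, A *m u = B *m u) -> A = B.
Proof.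
move=> H; apply/matrixP => i j.
have := congr1 (fun X : 'cV[R]_m => X i 0) (H (delta_mx j 0)).
by rewrite -!colE !mxE.
Qed.

Lemma det_comp (R : comNzRingType) (P : {poly R}) m : P \is monic -> size P = m.+1 ->
  \det (\matrix_(i < m, j < m) (if i == m.-1 :> nat then - P`_j else (i.+1 == j :> nat)%:R))
  = (-1) ^+ m * P`_0.
Proof.
move=> mP sP; have := char_poly_det (companionmx P).
rewrite companionmxK // /companionmx; move: (size P) sP => s -> /= ->.
by rewrite mulrA -exprMn mulrNN mulr1 expr1n mul1r.
Qed.

Section Main.
Variables (p k : nat) (F : fieldType) (K : finFieldType) (iota : {rmorphism K -> F})
  (L : {poly F}) (n : nat) (E : splittingFieldType F).
Hypotheses (pr : prime p) (k0 : (0 < k)%N) (chF : p \in [pchar F]) (cardK : #|K| = (p ^ k)%N)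
  (qL : is_qpoly (p ^ k) L) (dL : qdegree_is (p ^ k) L n) (n1 : (1 <= n)%N)
  (monL : L \is monic) (L1 : L`_1 = (-1) ^+ n) (irrL : irreducible_poly (L %/ 'X)).

Local Notation q := (p ^ k)%N.
Local Notation Lp := (map_poly (in_alg E) L).

Definition io : {rmorphism K -> E} := in_alg E \o iota.

Lemma q_gt1 : (1 < q)%N.
Proof. by rewrite -{1}(expn0 p) ltn_exp2l // prime_gt1. Qed.

Lemma chE : p \in [pchar E].
Proof. by rewrite (pchar_lalg E). Qed.

Lemma qnat i : [pchar E].-nat (q ^ i)%N.
Proof. by rewrite -expnM pnatX pnatE // chE. Qed.

Lemma ioq c i : io c ^+ (q ^ i)%N = io c.
Proof.
rewrite -rmorphXn; congr (io _); elim: i => [|i IH]; first by rewrite expr1.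
by rewrite expnSr exprM IH -cardK expf_card.
Qed.

Lemma frob_sum (I : Type) (r : seq I) (P : pred I) (f : I -> E) i :
  (\sum_(j <- r | P j) f j) ^+ (q ^ i)%N = \sum_(j <- r | P j) f j ^+ (q ^ i)%N.
Proof.
exact: (rmorph_sum (frq (qnat i)) r P f).
Qed.

Lemma sizeL : size L = (q ^ n).+1. Proof. exact: dL. Qed.

Definition a (i : nat) : E := Lp`_(q ^ i)%N.

Lemma Lp_coef_nz j : Lp`_j != 0 -> exists2 i, (i <= n)%N & j = (q ^ i)%N.
Proof.
rewrite coef_map /= scaler_eq0 oner_eq0 orbF => nz.
have [i ej] := qL j nz; exists i => //; rewrite ej in nz.
have : (q ^ i < size L)%N.
  rewrite ltnNge; apply/negP => /leq_sizeP H.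
  by move/eqP: nz; apply; apply: H.
by rewrite sizeL ltnS leq_exp2l // q_gt1.
Qed.

Lemma Lp_expand : Lp = \sum_(i < n.+1) a i *: 'X^(q ^ i)%N.
Proof.
apply/polyP => j; rewrite coef_sum.
under eq_bigr do rewrite coefZ coefXn.
have [z|nz] := eqVneq Lp`_j 0.
  rewrite z big1 // => i _; case: eqP => [e|]; last by rewrite mulr0.
  by rewrite /a -e z mul0r.
have [i lein ->] := Lp_coef_nz j nz.
rewrite (bigD1 (Ordinal (leq_ltn_trans lein (ltnSn n)))) //= eqxx mulr1 big1 ?addr0 //.
move=> i' ne; rewrite eqn_exp2l ?q_gt1 //; case: eqP => [e|]; last by rewrite mulr0.
by move: ne; rewrite -val_eqE /= e eqxx.
Qed.

Lemma hornerLp x : Lp.[x] = \sum_(i < n.+1) a i * x ^+ (q ^ i)%N.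
Proof.
by rewrite {1}Lp_expand horner_sum; apply: eq_bigr => i _; rewrite hornerZ hornerXn.
Qed.

Lemma a_n : a n = 1.
Proof.
have /monicP := monic_map (in_alg E) monL.
by rewrite lead_coefE size_map_poly sizeL.
Qed.

Lemma a_0 : a 0 = (-1) ^+ n.
Proof. by rewrite /a expn0 coef_map /= L1 -in_algE rmorphXn rmorphN1. Qed.

Lemma a0_nz : a 0 != 0.
Proof. by rewrite a_0 expf_neq0 // oppr_eq0 oner_eq0. Qed.

Lemma deriv_Lp : Lp^`() = (a 0)%:P.
Proof.
rewrite Lp_expand raddf_sum big_ord_recl /= big1 ?addr0.
  by rewrite derivZ expn0 derivX alg_polyC.
move=> i _; rewrite derivZ derivXn -mulr_natr.
have -> : ((q ^ (bump 0 i))%N%:R : {poly E}) = 0.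
  rewrite -polyC_natr; apply/eqP; rewrite polyC_eq0 -(dvdn_pcharf chE).
  by rewrite -expnM dvdn_exp // muln_gt0 k0.
by rewrite mulr0 scaler0.
Qed.

Lemma trans_roots x y : root Lp x -> root Lp y -> x != 0 -> y != 0 ->
  exists2 g : gal_of (fullv : {vspace E}), g \in 'Gal(fullv / 1%VS)%g & g x = y.
Proof.
move=> rx ry nx ny.
have L0 : L`_0 = 0.
  apply/eqP; apply: contraT => nz; have [i e] := qL 0 nz.
  have : (0 < q ^ i)%N by rewrite expn_gt0 ltnW ?q_gt1.
  by rewrite -e.
have dX : 'X %| L by rewrite -['X]subr0 -polyC0 dvdp_XsubCl /root horner_coef0 L0.
have irrQ := irrL; set Q := L %/ 'X in irrQ.
have eLp : Lp = map_poly (in_alg E) Q * 'X by rewrite -{1}(divpK dX) rmorphM /= map_polyX.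
have rQ z : root Lp z -> z != 0 -> root (map_poly (in_alg E) Q) z.
  by rewrite eLp rootM /root hornerX => /orP [//|/eqP -> ]; rewrite eqxx.
have [m0 em] : exists m0, minPoly 1%VS x = map_poly (in_alg E) m0.
  by apply/polyOver1P; exact: minPolyOver.
have QO : map_poly (in_alg E) Q \is a polyOver 1%VS by apply/polyOver1P; exists Q.
have dv : m0 %| Q by rewrite -(dvdp_map (in_alg E)) -em minPoly_dvdp // rQ.
have sz : size m0 != 1.
  rewrite -(size_map_poly (in_alg E)) -em neq_ltn.
  have mnz : minPoly 1%VS x != 0 by apply: monic_neq0; apply: monic_minPoly.
  by rewrite (root_size_gt1 mnz (root_minPoly 1%VS x)) orbT.
have eqm : m0 %= Q by exact: irrQ.2.
have ry' : root (minPoly 1%VS x) y.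
  rewrite em (eqp_root (_ : _ %= map_poly (in_alg E) Q)) ?rQ //.
  by rewrite eqp_map.
exact: (normalField_root_minPoly (sub1v _) (normalFieldf 1%VS) (memvf x) ry').
Qed.

Section Roots.
Variable rs : seq E.
Hypothesis Lp_rs : Lp = \prod_(z <- rs) ('X - z%:P).

Lemma uniq_rs : uniq rs.
Proof.
rewrite -separable_prod_XsubC -Lp_rs unlock /separable_poly deriv_Lp.
by rewrite -alg_polyC coprimepZr ?a0_nz // coprimep1.
Qed.

Lemma size_rs : size rs = (q ^ n)%N.
Proof.
have := size_prod_XsubC rs id; rewrite /= -Lp_rs size_map_poly sizeL.
by case.
Qed.

Lemma rootLp x : root Lp x = (x \in rs).
Proof. by rewrite Lp_rs root_prod_XsubC. Qed.


Definition comb m (w : seq E) (c : 'cV[K]_m) := \sum_(i < m) io (c i 0) * w`_i.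
Arguments comb {m} w c.

Lemma combB m w (c d : 'cV[K]_m) : comb w (c - d) = comb w c - comb w d.
Proof.
rewrite /comb -sumrB; apply: eq_bigr => i _.
by rewrite !mxE rmorphB mulrBl.
Qed.

Lemma combZ m w (x : K) (c : 'cV[K]_m) : comb w (x *: c) = io x * comb w c.
Proof.
rewrite /comb mulr_sumr; apply: eq_bigr => i _.
by rewrite !mxE rmorphM mulrA.
Qed.

Lemma comb0 m w : comb w (0 : 'cV[K]_m) = 0.
Proof. by rewrite -(subrr 0) combB subrr. Qed.

Lemma frob_comb m w (c : 'cV[K]_m) i :
  (comb w c) ^+ (q ^ i)%N = \sum_(j < m) io (c j 0) * w`_j ^+ (q ^ i)%N.
Proof.
rewrite /comb frob_sum; apply: eq_bigr => j _; by rewrite exprMn ioq.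
Qed.

Lemma root_comb m w (c : 'cV[K]_m) :
  (forall j : 'I_m, root Lp w`_j) -> root Lp (comb w c).
Proof.
move=> Hw; apply/rootP; rewrite hornerLp.
under eq_bigr do rewrite frob_comb mulr_sumr.
rewrite exchange_big big1 // => j _ /=.
have /rootP := Hw j; rewrite hornerLp => H0.
rewrite -[RHS](mulr0 (io (c j 0))) -{}[in RHS]H0 mulr_sumr.
by apply: eq_bigr => i _; rewrite mulrCA.
Qed.

Lemma comb_rcons m w r (c : 'cV[K]_m.+1) : size w = m ->
  comb (rcons w r) c =
  comb w (\col_i c (widen_ord (leqnSn m) i) 0) + io (c ord_max 0) * r.
Proof.
move=> sw; rewrite /comb big_ord_recr /=; congr (_ + _ * _).
  by apply: eq_bigr => i _; rewrite mxE nth_rcons sw ltn_ord.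
by rewrite nth_rcons sw ltnn eqxx.
Qed.

Lemma greedy m : (m <= n)%N ->
  exists w : seq E, [/\ size w = m, forall j : 'I_m, root Lp w`_j &
                      injective (@comb m w)].
Proof.
elim: m => [_|m IH lemn].
  exists [::]; split => //; first by case.
  by move=> c d _; apply/matrixP => -[].
have [w [sw rw iw]] := IH (ltnW lemn).
pose s := [seq comb w c | c <- enum 'cV[K]_m].
have ss : size s = (q ^ m)%N by rewrite size_map -cardE card_mx cardK muln1.
have [/allP H | /allPn [r rrs rns]] := boolP (all (mem s) rs).
  have := uniq_leq_size uniq_rs H; rewrite size_rs ss leq_exp2l ?q_gt1 //.
  by rewrite leqNgt lemn.
exists (rcons w r); split.
- by rewrite size_rcons sw.
- move=> j; rewrite nth_rcons sw; case: ltnP => [ltjm|gejm].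
    exact: (rw (Ordinal ltjm)).
  by rewrite eqn_leq gejm -ltnS ltn_ord /= rootLp.
move=> c d; rewrite !comb_rcons // => eqcd.
set c' := \col_i c (widen_ord (leqnSn m) i) 0 in eqcd *.
set d' := \col_i d (widen_ord (leqnSn m) i) 0 in eqcd *.
have [eab|nab] := eqVneq (c ord_max 0) (d ord_max 0).
  move: eqcd; rewrite eab => /addIr /iw ecd.
  apply/matrixP => i j; rewrite (ord1 j); case: (ltnP i m) => [lim|gim].
    have := congr1 (fun X : 'cV[K]_m => X (Ordinal lim) 0) ecd; rewrite !mxE.
    by have -> : widen_ord (leqnSn m) (Ordinal lim) = i by apply: val_inj.
  have -> : i = ord_max by apply: val_inj; apply/eqP; rewrite eqn_leq gim -ltnS ltn_ord.
  exact: eab.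
exfalso; move/negP: rns; apply; apply/mapP.
exists ((c ord_max 0 - d ord_max 0)^-1 *: (d' - c')); first by rewrite mem_enum.
rewrite combZ combB fmorphV rmorphB.
have -> : comb w d' - comb w c' = (io (c ord_max 0) - io (d ord_max 0)) * r.
  rewrite -[LHS]addr0 -(subrr (comb w d' + io (d ord_max 0) * r)) -[X in _ + (X - _)]eqcd.
  ring.
by rewrite mulrA mulVf ?mul1r // subr_eq0 (inj_eq (fmorph_inj io)).
Qed.

Section Gal.
Hypothesis gen_rs : <<1%VS & rs>>%VS = fullv.
Variable w : seq E.
Hypotheses (sw : size w = n) (rw : forall j : 'I_n, root Lp w`_j)
  (iw : injective (@comb n w)).

Lemma comb_surj x : root Lp x -> exists c : 'cV[K]_n, comb w c = x.
Proof.
pose s1 := [seq comb w c | c <- enum 'cV[K]_n].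
have u1 : uniq s1 by rewrite map_inj_uniq // enum_uniq.
have sub1 : {subset s1 <= rs}.
  by move=> y /mapP [c _ ->]; rewrite -rootLp; apply: root_comb.
have [|_ eq1] := uniq_min_size u1 sub1.
  by rewrite size_rs size_map -cardE card_mx cardK muln1.
by rewrite rootLp -eq1 => /mapP [c _ ->]; exists c.
Qed.

Lemma in1 (x : F) : in_alg E x \in 1%VS.
Proof. by rewrite /= rpredZ // mem1v. Qed.

Lemma gal_fix (g : gal_of (fullv : {vspace E})) (x : F) :
  g \in 'Gal(fullv / 1%VS)%g -> g (in_alg E x) = in_alg E x.
Proof. by move=> gG; rewrite (fixed_gal (sub1v _) gG) ?in1. Qed.

Lemma gal_io (g : gal_of (fullv : {vspace E})) c :
  g \in 'Gal(fullv / 1%VS)%g -> g (io c) = io c.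
Proof. exact: gal_fix. Qed.

Lemma gal_a (g : gal_of (fullv : {vspace E})) i :
  g \in 'Gal(fullv / 1%VS)%g -> g (a i) = a i.
Proof. by move=> gG; rewrite /a coef_map gal_fix. Qed.

Lemma gal_horner (g : gal_of (fullv : {vspace E})) x :
  g \in 'Gal(fullv / 1%VS)%g -> g (Lp.[x]) = Lp.[g x].
Proof.
move=> gG; rewrite !hornerLp rmorph_sum; apply: eq_bigr => i _.
by rewrite rmorphM rmorphXn; congr (_ * _); exact: gal_a.
Qed.

Lemma gal_root (g : gal_of (fullv : {vspace E})) x :
  g \in 'Gal(fullv / 1%VS)%g -> root Lp x -> root Lp (g x).
Proof. by move=> gG /rootP H; apply/rootP; rewrite -gal_horner // H rmorph0. Qed.

Lemma gal_comb (g : gal_of (fullv : {vspace E})) m (v : seq E) (c : 'cV[K]_m) :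
  g \in 'Gal(fullv / 1%VS)%g -> g (comb v c) = \sum_(j < m) io (c j 0) * g v`_j.
Proof.
move=> gG; rewrite rmorph_sum; apply: eq_bigr => j _.
by rewrite rmorphM; congr (_ * _); exact: gal_io.
Qed.

Fact Mg_key : unit. Proof. by []. Qed.
Definition Mg (g : gal_of (fullv : {vspace E})) : 'M[K]_n := locked_with Mg_key
  (\matrix_(i < n, j < n) (odflt 0 [pick c : 'cV[K]_n | comb w c == g w`_j]) i 0).

Lemma col_M g j : g \in 'Gal(fullv / 1%VS)%g -> comb w (col j (Mg g)) = g w`_j.
Proof.
move=> gG; have [c Hc] := comb_surj _ (gal_root _ _ gG (rw j)).
have -> : col j (Mg g) = odflt 0 [pick c : 'cV[K]_n | comb w c == g w`_j].
  by apply/matrixP => i l; rewrite /Mg unlock !mxE (ord1 l).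
case: pickP => [c' /eqP // | H].
by have := H c; rewrite Hc eqxx.
Qed.

Lemma Mcomb g u : g \in 'Gal(fullv / 1%VS)%g ->
  comb w (Mg g *m u) = g (comb w u).
Proof.
move=> gG; rewrite gal_comb // /comb.
under eq_bigr do rewrite mxE rmorph_sum mulr_suml.
rewrite exchange_big; apply: eq_bigr => j _.
rewrite -col_M // /comb mulr_sumr; apply: eq_bigr => i _.
by rewrite !mxE (rmorphM io) mulrAC mulrC.
Qed.

Lemma M_mul g h : g \in 'Gal(fullv / 1%VS)%g -> h \in 'Gal(fullv / 1%VS)%g ->
  Mg (g * h)%g = Mg h *m Mg g.
Proof.
move=> gG hG; apply: mx_ext => u; apply: iw.
by rewrite -mulmxA !Mcomb ?groupM // galM // memvf.
Qed.

Lemma M_inj g h : g \in 'Gal(fullv / 1%VS)%g -> h \in 'Gal(fullv / 1%VS)%g ->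
  Mg g = Mg h -> g = h.
Proof.
move=> gG hG eM.
have eroot x : x \in rs -> g x = h x.
  rewrite -rootLp => /comb_surj [c <-]; by rewrite -!Mcomb // eM.
pose t := (g * h^-1)%g.
have tfix : {subset rs <= fixedField [set t]}.
  move=> x xrs; apply/fixedFieldP; first exact: memvf.
  move=> y; rewrite inE => /eqP ->.
  rewrite galM ?memvf // eroot // -galM ?memvf // mulgV gal_id //.
have tall : forall x, t x = x.
  move=> x; have : x \in fixedField [set t].
    have : (<<1%VS & rs>> <= fixedField [set t])%VS.
      by apply/Fadjoin_seqP; split; [exact: sub1v | exact: tfix].
    by rewrite gen_rs => /subvP; apply; exact: memvf.
  by move/fixedFieldP => /(_ (memvf x) t); rewrite inE eqxx; apply.
apply/eqP; rewrite eq_mulgV1; apply/gal_eqP => x _.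
by rewrite tall gal_id.
Qed.

Definition W : 'M[E]_n := \matrix_(i < n, j < n) w`_j ^+ (q ^ i)%N.

Lemma Delta_g g : g \in 'Gal(fullv / 1%VS)%g ->
  g (\det W) = \det W * io (\det (Mg g)).
Proof.
move=> gG; rewrite -det_map_mx -det_map_mx -det_mulmx; congr (\det _).
apply/matrixP => i j; rewrite !mxE.
under eq_bigr do rewrite !mxE.
rewrite rmorphXn.
transitivity ((comb w (col j (Mg g))) ^+ (q ^ i)%N); first by rewrite col_M.
rewrite frob_comb; apply: eq_bigr => l _.
by rewrite mxE mulrC.
Qed.

Definition Pc : {poly E} := \poly_(i < n.+1) a i.

Lemma size_Pc : size Pc = n.+1.
Proof. by rewrite size_poly_eq //= a_n oner_neq0. Qed.

Lemma monic_Pc : Pc \is monic.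
Proof. by apply/monicP; rewrite lead_coefE size_Pc coef_poly ltnSn a_n. Qed.

Definition Cm : 'M[E]_n :=
  \matrix_(i < n, j < n) (if i == n.-1 :> nat then - Pc`_j else (i.+1 == j :> nat)%:R).

Lemma det_Cm : \det Cm = 1.
Proof.
rewrite det_comp ?monic_Pc ?size_Pc // coef_poly /= a_0.
by rewrite -exprMn mulrNN mulr1 expr1n.
Qed.

Lemma frobW : map_mx (frq (qnat 1)) W = Cm *m W.
Proof.
apply/matrixP => i j; rewrite !mxE /frq -exprM -expnD addn1.
under eq_bigr do rewrite !mxE.
have [ein|nein] := eqVneq (i : nat) n.-1.
  rewrite ein prednK //.
  under eq_bigr => l _ do rewrite coef_poly ltnS (ltnW (ltn_ord l)) mulNr.
  rewrite sumrN; have /rootP := rw j; rewrite hornerLp big_ord_recr /= a_n mul1r.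
  by move/eqP; rewrite addrC addr_eq0 => /eqP.
have lt : (i.+1 < n)%N.
  by rewrite ltn_neqAle ltn_ord andbT; apply: contra nein => /eqP e; apply/eqP; lia.
rewrite (bigD1 (Ordinal lt)) //= eqxx mul1r big1 ?addr0 //.
move=> l; rewrite -val_eqE /= eq_sym => /negbTE ->.
by rewrite mul0r.
Qed.

Lemma Delta_q : \det W ^+ (q ^ 1)%N = \det W.
Proof.
have := det_map_mx (frq (qnat 1)) W; rewrite frobW det_mulmx det_Cm mul1r.
by move=> e; symmetry; exact: e.
Qed.

Lemma Delta_in : exists c, \det W = io c.
Proof.
case: (pickP (fun c => io c == \det W)) => [c /eqP <- | H]; first by exists c.
exfalso.
pose s := \det W :: [seq io c | c <- enum K].
pose Q : {poly E} := 'X^(q ^ 1)%N - 'X.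
have sQ : size Q = (q ^ 1).+1.
  rewrite /Q size_polyDl ?size_polyXn // size_opp size_polyX ltnS expn1.
  exact: q_gt1.
have Qnz : Q != 0 by rewrite -size_poly_eq0 sQ.
have us : uniq s.
  rewrite /= (map_inj_uniq (fmorph_inj io)) enum_uniq andbT.
  by apply/mapP => -[c _ e]; move: (H c); rewrite /= e eqxx.
have rs' : all (root Q) s.
  rewrite /= {1}/root /Q !hornerE Delta_q subrr eqxx /=.
  apply/allP => y /mapP [c _ ->]; rewrite /root !hornerE ioq subrr //.
have := max_poly_roots Qnz rs' us.
by rewrite sQ /= size_map -cardE cardK expn1 ltnn.
Qed.

Lemma Delta_nz : \det W != 0.
Proof.
apply/negP => /det0P [r rnz rW].
pose P2 : {poly E} := \sum_(i < n) r 0 i *: 'X^(q ^ i)%N.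
have rootP2 : all (root P2) rs.
  apply/allP => x; rewrite -rootLp => /comb_surj [c <-].
  apply/rootP; rewrite horner_sum.
  under eq_bigr do rewrite hornerZ hornerXn frob_comb mulr_sumr.
  rewrite exchange_big big1 // => j _.
  have := congr1 (fun X : 'rV[E]_n => X 0 j) rW; rewrite !mxE => H0.
  rewrite -[RHS](mulr0 (io (c j 0))) -{}[in RHS]H0 mulr_sumr.
  by apply: eq_bigr => i _; rewrite mxE mulrCA.
have [i0 ri0] : exists i0, r 0 i0 != 0.
  case: (pickP (fun i => r 0 i != 0)) => [i0 H|H]; first by exists i0.
  move/negP: rnz; case; apply/eqP/matrixP => i j; rewrite (ord1 i) mxE.
  by move: (H j) => /negbFE/eqP.
have P2nz : P2 != 0.
  apply: contra ri0 => /eqP P20; apply/eqP.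
  have := congr1 (fun P : {poly E} => P`_(q ^ i0)%N) P20; rewrite coef0 coef_sum.
  rewrite (bigD1 i0) //= coefZ coefXn eqxx mulr1 big1 ?addr0 //.
  move=> i ne; rewrite coefZ coefXn eqn_exp2l ?q_gt1 //.
  by rewrite eq_sym (inj_eq val_inj) (negbTE ne) mulr0.
have sP2 : (size P2 <= (q ^ n.-1).+1)%N.
  apply/leq_sizeP => j lej; rewrite coef_sum big1 // => i _.
  rewrite coefZ coefXn; case: eqP => [e|]; last by rewrite mulr0.
  have : (q ^ i <= q ^ n.-1)%N by rewrite leq_exp2l ?q_gt1 // -ltnS prednK.
  by rewrite -e leqNgt lej.
have := max_poly_roots P2nz rootP2 uniq_rs.
rewrite size_rs => /leq_trans /(_ sP2).
have : (q ^ n.-1 * q = q ^ n)%N by rewrite -expnSr prednK.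
have : (0 < q ^ n.-1)%N by rewrite expn_gt0 ltnW ?q_gt1.
have := q_gt1; move: (q ^ n.-1)%N (q ^ n)%N q => x y z; nia.
Qed.

Lemma detM g : g \in 'Gal(fullv / 1%VS)%g -> \det (Mg g) = 1.
Proof.
move=> gG; have [c ec] := Delta_in.
have := Delta_g g gG; rewrite ec gal_io // => e.
apply/eqP; rewrite -(fmorph_eq1 io); apply/eqP.
apply: (mulfI (x := io c)); first by rewrite -ec Delta_nz.
by rewrite mulr1 -e.
Qed.

Lemma main_gal : exists phi : gal_of (fullv : {vspace E}) -> 'M[K]_n,
    [/\ {in 'Gal(fullv / 1%VS)%g &, forall g h, phi (g * h)%g = phi g *m phi h},
        {in 'Gal(fullv / 1%VS)%g &, injective phi},
        {in 'Gal(fullv / 1%VS)%g, forall g, \det (phi g) = 1} &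
        forall u v : 'cV[K]_n, u != 0 -> v != 0 ->
          exists2 g, g \in 'Gal(fullv / 1%VS)%g & phi g *m u = v].
Proof using All.
exists (fun g => Mg (g^-1)%g); split.
- by move=> g h gG hG /=; rewrite invMg M_mul ?groupV.
- move=> g h gG hG /= e; apply: invg_inj; apply: M_inj => //; by rewrite groupV.
- by move=> g gG /=; rewrite detM ?groupV.
move=> u v un vn.
have cnz (c : 'cV[K]_n) : c != 0 -> comb w c != 0.
  by apply: contra => /eqP e; apply/eqP; apply: iw; rewrite e comb0.
have [g gG gx] := trans_roots _ _ (root_comb _ _ u rw) (root_comb _ _ v rw) (cnz u un) (cnz v vn).
exists (g^-1)%g; first by rewrite groupV.
by rewrite invgK; apply: iw; rewrite Mcomb.
Qed.

End Gal.

End Roots.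
Lemma main_sec : splittingFieldFor 1%VS Lp fullv ->
  exists phi : gal_of (fullv : {vspace E}) -> 'M[K]_n,
    [/\ {in 'Gal(fullv / 1%VS)%g &, forall g h, phi (g * h)%g = phi g *m phi h},
        {in 'Gal(fullv / 1%VS)%g &, injective phi},
        {in 'Gal(fullv / 1%VS)%g, forall g, \det (phi g) = 1} &
        forall u v : 'cV[K]_n, u != 0 -> v != 0 ->
          exists2 g, g \in 'Gal(fullv / 1%VS)%g & phi g *m u = v].
Proof using All.
case=> rs Drs genrs.
have Lp_rs : Lp = \prod_(z <- rs) ('X - z%:P).
  by apply/eqP; rewrite -eqp_monic ?monic_prod_XsubC // monic_map.
have [w [sw rw iw]] := greedy rs Lp_rs n (leqnn n).
exact: (main_gal rs Lp_rs genrs w sw rw iw).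
Qed.

End Main.

Theorem theorem3p1
  (p k : nat) (F : fieldType) (K : finFieldType) (iota : {rmorphism K -> F})
  (L : {poly F}) (n : nat) (E : splittingFieldType F) :
  prime p -> (0 < k)%N -> p \in [pchar F] -> #|K| = (p ^ k)%N ->
  is_qpoly (p ^ k) L -> qdegree_is (p ^ k) L n -> (1 <= n)%N ->
  L \is monic ->
  irreducible_poly (L %/ 'X) ->
  L`_1 = (-1) ^+ n ->
  splittingFieldFor 1%VS (map_poly (in_alg E) L) fullv ->
  exists phi : gal_of (fullv : {vspace E}) -> 'M[K]_n,
    [/\ {in 'Gal(fullv / 1%VS)%g &, forall g h, phi (g * h)%g = phi g *m phi h},
        {in 'Gal(fullv / 1%VS)%g &, injective phi},
        {in 'Gal(fullv / 1%VS)%g, forall g, \det (phi g) = 1} &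
        forall u v : 'cV[K]_n, u != 0 -> v != 0 ->
          exists2 g, g \in 'Gal(fullv / 1%VS)%g & phi g *m u = v].
Proof.
move=> pr k0 chF cardK qL dL n1 monL irrL L1 spl.
exact: (@main_sec p k F K iota L n E pr k0 chF cardK qL dL n1 monL L1 irrL spl).
Qed.
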